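(* Let $T\in\mathcal M_n$, and let $f,g:[0,\infty)\to[0,\infty)$ be continuous with $f(t)g(t)=t$ for all $t\ge0$. Then for all vectors $x,y\in\mathbb C^n$, \[|\langle\mathfrak RTx,y\rangle|\le\frac12\sqrt{\big\langle(f^2(|T|)+f^2(|T^*|))x,x\big\rangle\,\big\langle(g^2(|T|)+g^2(|T^*|))y,y\big\rangle}\] and \[|\langle\mathfrak ITx,y\rangle|\le\frac12\sqrt{\big\langle(f^2(|T|)+f^2(|T^*|))x,x\big\rangle\,\big\langle(g^2(|T|)+g^2(|T^*|))y,y\big\rangle}.\]
   Context: $\mathcal M_n$ denotes the algebra of $n\times n$ complex matrices. $|X|=(X^*X)^{1/2}$; functions of positive semidefinite matrices are defined by functional calculus. $\mathfrak RT=\frac{T+T^*}{2}$, $\mathfrak IT=\frac{T-T^*}{2i}$. $\langle\cdot,\cdot\rangle$ is the standard inner product on $\mathbb C^n$. *)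

(* Defs.v *)
From HB Require Import structures.
From mathcomp Require Import all_boot all_order all_algebra.
From mathcomp Require Import sesquilinear spectral.
From mathcomp Require Import complex.
From mathcomp Require Import all_classical all_reals all_analysis.

Set Implicit Arguments.
Unset Strict Implicit.
Unset Printing Implicit Defensive.

Import Order.TTheory GRing.Theory Num.Theory Num.Def.
Local Open Scope ring_scope.
Local Open Scope sesquilinear_scope.

Definition hadj {R : realType} n (T : 'M[R[i]]_n) : 'M[R[i]]_n := T ^t conjC.

Definition inner {R : realType} n (u v : 'cV[R[i]]_n) : R[i] :=
  \sum_(i < n) u i 0 * (v i 0)^*.

(* Functional calculus for a Hermitian (normal) matrix A = U^-1 diag(d) U
   (U unitary, given by MathComp's spectral theorem):
   h(A) := U^-1 diag(h(d_i)) U.  For Hermitian A the d_i are real, so h is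
   applied to their real parts. *)
Definition matfun {R : realType} n (h : R -> R) (A : 'M[R[i]]_n) : 'M[R[i]]_n :=
  invmx (spectralmx A) *m
  diag_mx (map_mx (fun z : R[i] => ((h (complex.Re z))%:C)%C) (spectral_diag A)) *m
  spectralmx A.

Definition absmx {R : realType} n (X : 'M[R[i]]_n) : 'M[R[i]]_n :=
  matfun (@Num.sqrt R) (hadj X *m X).

Definition cartRe {R : realType} n (T : 'M[R[i]]_n) : 'M[R[i]]_n :=
  (2 : R[i])^-1 *: (T + hadj T).
Definition cartIm {R : realType} n (T : 'M[R[i]]_n) : 'M[R[i]]_n :=
  (2 * 'i : R[i])^-1 *: (T - hadj T).

(* Main.v *)
Require Import Defs.
From HB Require Import structures.
From mathcomp Require Import all_boot all_order all_algebra.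
From mathcomp Require Import sesquilinear spectral.
From mathcomp Require Import complex.
From mathcomp Require Import all_classical all_reals all_analysis.

Import Order.TTheory GRing.Theory Num.Theory Num.Def.
Import numFieldNormedType.Exports.
Local Open Scope ring_scope.

From mathcomp Require Import ring.
Set Implicit Arguments.
Unset Strict Implicit.
Unset Printing Implicit Defensive.
Section Gen.
Variable C : numClosedFieldType.
Local Open Scope sesquilinear_scope.

Lemma unitary_tl n (U : 'M[C]_n) : U \is unitarymx -> U ^t* *m U = 1%:M.
Proof. by move=> uU; rewrite -invmx_unitary // mulVmx // unitarymx_unit. Qed.

Lemma unitary_tr n (U : 'M[C]_n) : U \is unitarymx -> U *m U ^t* = 1%:M.
Proof. by move=> uU; rewrite -invmx_unitary // mulmxV // unitarymx_unit. Qed.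

Lemma mf_unique n (phi : C -> C) (U : 'M[C]_n) (s : 'rV[C]_n) :
  U \is unitarymx ->
  invmx (spectralmx (U^t* *m diag_mx s *m U)) *m
    diag_mx (map_mx phi (spectral_diag (U^t* *m diag_mx s *m U))) *m
    spectralmx (U^t* *m diag_mx s *m U)
  = U^t* *m diag_mx (map_mx phi s) *m U.
Proof.
set A := U^t* *m diag_mx s *m U => uU.
have An : A \is normalmx.
  by apply/orthomx_spectral_subproof; exists (U, s) => //=; rewrite invmx_unitary.
have hA := orthomx_spectralP An.
have uV := spectral_unitarymx A.
move: hA; set V := spectralmx A; set e := spectral_diag A => hA.
rewrite invmx_unitary //.
set W := V *m U^t*.
have key : diag_mx e *m W = W *m diag_mx s.
  have : V *m A *m U^t* = diag_mx e *m W.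
    by rewrite hA invmx_unitary // !mulmxA unitary_tr // mul1mx -mulmxA.
  rewrite /A !mulmxA -/W => <-.
  by rewrite -!mulmxA unitary_tr // mulmx1.
have WU : W *m U = V by rewrite -mulmxA unitary_tl // mulmx1.
have VW : V^t* *m W = U^t* by rewrite mulmxA unitary_tl // mul1mx.
clearbody W.
have key2 : diag_mx (map_mx phi e) *m W = W *m diag_mx (map_mx phi s).
  apply/matrixP => i j; move/matrixP: key => /(_ i j).
  rewrite !mul_diag_mx !mul_mx_diag !mxE.
  have [->|nz] := eqVneq (W i j) 0; first by move=> _; rewrite mulr0 mul0r.
  by rewrite mulrC => /(mulfI nz) ->; rewrite mulrC.
by rewrite -{2}WU mulmxA -(mulmxA _ _ W) key2 !mulmxA VW.
Qed.

Lemma trC_mul m n p (A : 'M[C]_(m,n)) (B : 'M[C]_(n,p)) : (A *m B)^t* = B^t* *m A^t*.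
Proof. by rewrite trmx_mul map_mxM. Qed.

Lemma trC_diag n (d : 'rV[C]_n) : (diag_mx d)^t* = diag_mx (map_mx conjC d).
Proof. by rewrite tr_diag_mx map_diag_mx. Qed.

Lemma quad_diag n (c : 'rV[C]_n) (u v : 'cV[C]_n) :
  (v^t* *m diag_mx c *m u) 0 0 = \sum_j conjC (v j 0) * c 0 j * u j 0.
Proof.
rewrite mul_mx_diag mxE; apply: eq_bigr => j _; rewrite !mxE.
by [].
Qed.

Lemma quad1 n (u v : 'cV[C]_n) : (v^t* *m u) 0 0 = \sum_j conjC (v j 0) * u j 0.
Proof. by rewrite mxE; apply: eq_bigr => j _; rewrite !mxE. Qed.

Lemma quad_dot n (p q : 'cV[C]_n) : (q^t* *m p) 0 0 = dotmx p^T q^T.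
Proof.
rewrite dotmxE quad1 mxE; apply: eq_bigr => j _; rewrite !mxE mulrC.
by [].
Qed.

Lemma core n (M : 'M[C]_n) (s t al be : 'rV[C]_n) :
  M^t* *m M = diag_mx (\row_j (s 0 j ^+ 2)) ->
  M *m M^t* = diag_mx (\row_i (t 0 i ^+ 2)) ->
  (forall j, 0 <= s 0 j) -> (forall i, 0 <= t 0 i) ->
  (forall i j, t 0 i = s 0 j -> be 0 i * al 0 j = s 0 j) ->
  (forall j, al 0 j \is Num.real) -> (forall i, be 0 i \is Num.real) ->
  forall u v : 'cV[C]_n,
  `|(v^t* *m M *m u) 0 0| ^+ 2 <=
   (u^t* *m diag_mx (\row_j (al 0 j ^+ 2)) *m u) 0 0 *
   (v^t* *m diag_mx (\row_i (be 0 i ^+ 2)) *m v) 0 0.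
Proof.
move=> h1 h2 s0 t0 hab alR beR u v.
have sR j : s 0 j \is Num.real := ger0_real (s0 j).
have nzcol i j : M i j != 0 -> s 0 j != 0.
  move=> nz; apply: contra nz => /eqP sj0.
  move/matrixP: h1 => /(_ j j); rewrite !mxE eqxx mulr1n sj0 expr0n /=.
  move=> /psumr_eq0P h.
  have := h _ i isT; rewrite !mxE mulrC => /(_ _)/eqP; rewrite mul_conjC_eq0; apply.
  by move=> k _; rewrite !mxE mulrC mul_conjC_ge0.
have supp i j : M i j != 0 -> t 0 i = s 0 j.
  move=> nz; have : (M *m M^t*) *m M = M *m (M^t* *m M) by rewrite mulmxA.
  rewrite h1 h2 => /matrixP /(_ i j); rewrite mul_diag_mx mul_mx_diag !mxE.
  rewrite mulrC => /(mulfI nz) /eqP; rewrite eqrXn2 //; first by move/eqP.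
pose D := diag_mx (\row_j (s 0 j)^-1); pose N := M *m D.
have hM : M = diag_mx be *m N *m diag_mx al.
  apply/matrixP => i j; rewrite mul_mx_diag mul_diag_mx /N /D mul_mx_diag !mxE.
  have [->|nz] := eqVneq (M i j) 0; first by rewrite mul0r mulr0 mul0r.
  have e := hab _ _ (supp _ _ nz).
  rewrite mulrAC e mulrCA mulfV ?mulr1 //.
  exact: nzcol nz.
have DR : D^t* = D.
  rewrite trC_diag; congr diag_mx; apply/rowP => j; rewrite !mxE conj_Creal //.
  by rewrite rpredV.
have NN : N^t* *m N = diag_mx (\row_j (s 0 j ^+ 2 * (s 0 j)^-1 * (s 0 j)^-1)).
  rewrite /N trC_mul DR -mulmxA (mulmxA _ M) h1.
  apply/matrixP => i j; rewrite mul_mx_diag mul_diag_mx !mxE.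
  case: (eqVneq i j) => [->|ne]; last by rewrite /= !mulr0n ?mulr0 ?mul0r ?mulr0.
  by rewrite /= !mulr1n; ring.
have cle j : s 0 j ^+ 2 * (s 0 j)^-1 * (s 0 j)^-1 <= 1.
  have [->|nz] := eqVneq (s 0 j) 0; first by rewrite expr0n /= !mul0r ler01.
  by rewrite expr2 mulfK // mulfV.
pose w := diag_mx al *m u; pose z := diag_mx be *m v.
have beC : map_mx conjC be = be by apply/rowP => i; rewrite mxE conj_Creal.
have alC : map_mx conjC al = al by apply/rowP => i; rewrite mxE conj_Creal.
have e1 : (v^t* *m M *m u) 0 0 = (z^t* *m (N *m w)) 0 0.
  by rewrite hM /z /w trC_mul trC_diag beC !mulmxA.
have e2 : (u^t* *m diag_mx (\row_j (al 0 j ^+ 2)) *m u) 0 0 = (w^t* *m w) 0 0.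
  rewrite quad_diag quad1; apply: eq_bigr => j _.
  rewrite /w mul_diag_mx !mxE rmorphM /= (conj_Creal (alR j)); ring.
have e3 : (v^t* *m diag_mx (\row_j (be 0 j ^+ 2)) *m v) 0 0 = (z^t* *m z) 0 0.
  rewrite quad_diag quad1; apply: eq_bigr => j _.
  rewrite /z mul_diag_mx !mxE rmorphM /= (conj_Creal (beR j)); ring.
rewrite e1 e2 e3 !quad_dot.
have CS : `|dotmx (N *m w)^T z^T| ^+ 2 <=
    dotmx (N *m w)^T (N *m w)^T * dotmx z^T z^T :=
  (CauchySchwarz (@dotmx C n) (N *m w)^T z^T).1.
apply: le_trans CS _.
apply: ler_wpM2r; first by rewrite -quad_dot quad1 sumr_ge0 // => j _; rewrite mulrC mul_conjC_ge0.
rewrite -(quad_dot (N *m w) (N *m w)) -(quad_dot w w) trC_mul mulmxA -(mulmxA _ _ N) NN quad_diag quad1.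
apply: ler_sum => j _; rewrite mulrAC; apply: ler_piMr; last by rewrite mxE.
by rewrite mulrC mul_conjC_ge0.
Qed.

Lemma fin (c p q a1 a2 b1 b2 : C) :
  `|c| = 2^-1 -> 0 <= a1 -> 0 <= a2 -> 0 <= b1 -> 0 <= b2 ->
  `|p| ^+ 2 <= a1 * b2 -> `|q| ^+ 2 <= a2 * b1 ->
  `|c * (p + q)| <= 2^-1 * sqrtC ((a1 + a2) * (b1 + b2)).
Proof.
move=> hc ha1 ha2 hb1 hb2 hp hq.
rewrite normrM hc; apply: ler_wpM2l; first by rewrite invr_ge0 ler0n.
have sq (x y : C) : 0 <= y -> `|x| ^+ 2 <= y -> `|x| <= sqrtC y.
  move=> hy hxy; rewrite -(sqrCK (normr_ge0 x)) ler_sqrtC //.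
  by rewrite nnegrE exprn_ge0.
apply: le_trans (ler_normD p q) _.
have hp' : `|p| <= sqrtC a1 * sqrtC b2.
  by rewrite -sqrtCM // (sq p) // mulr_ge0.
have hq' : `|q| <= sqrtC a2 * sqrtC b1.
  by rewrite -sqrtCM // (sq q) // mulr_ge0.
apply: le_trans (lerD hp' hq') _.
set x1 := sqrtC a1; set x2 := sqrtC a2; set y1 := sqrtC b1; set y2 := sqrtC b2.
have gx1 : 0 <= x1 by rewrite sqrtC_ge0.
have gx2 : 0 <= x2 by rewrite sqrtC_ge0.
have gy1 : 0 <= y1 by rewrite sqrtC_ge0.
have gy2 : 0 <= y2 by rewrite sqrtC_ge0.
have -> : (a1 + a2) * (b1 + b2) = (x1 ^+ 2 + x2 ^+ 2) * (y1 ^+ 2 + y2 ^+ 2).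
  by rewrite !sqrtCK.
have L0 : 0 <= x1 * y2 + x2 * y1 by rewrite addr_ge0 // mulr_ge0.
rewrite -(sqrCK L0) ler_sqrtC ?nnegrE ?exprn_ge0 ?mulr_ge0 ?addr_ge0 ?exprn_ge0 //.
rewrite -subr_ge0.
have -> : (x1 ^+ 2 + x2 ^+ 2) * (y1 ^+ 2 + y2 ^+ 2) - (x1 * y2 + x2 * y1) ^+ 2
   = (x1 * y1 - x2 * y2) * conjC (x1 * y1 - x2 * y2).
  rewrite conj_Creal; first by ring.
  by rewrite rpredB // rpredM // ger0_real.
exact: mul_conjC_ge0.
all: by rewrite mulr_ge0.
Qed.
End Gen.

Section RS.
Variable R : realType.
Local Open Scope sesquilinear_scope.
Local Open Scope ring_scope.

Lemma inner_quad n (u v : 'cV[R[i]]_n) : inner u v = (v^t* *m u) 0 0.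
Proof. by rewrite quad1 /inner; apply: eq_bigr => j _; rewrite mulrC. Qed.

Lemma hadjK n (T : 'M[R[i]]_n) : hadj (hadj T) = T.
Proof. by rewrite /hadj trmxCK. Qed.

Lemma normal_sq n (T : 'M[R[i]]_n) : hadj T *m T \is normalmx.
Proof.
apply/normalmxP; have -> : (hadj T *m T)^t* = hadj T *m T.
  by rewrite trC_mul trmxCK.
by [].
Qed.

Lemma fun_absmx n (h : R -> R) (T : 'M[R[i]]_n) :
  matfun h (absmx T) =
  (spectralmx (hadj T *m T))^t* *m
  diag_mx (\row_j ((h (Num.sqrt (complex.Re (spectral_diag (hadj T *m T) 0 j))))%:C)%C)
  *m spectralmx (hadj T *m T).
Proof.
have uP := spectral_unitarymx (hadj T *m T).
have -> : absmx T = (spectralmx (hadj T *m T))^t* *m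
    diag_mx (map_mx (fun z : R[i] => ((Num.sqrt (complex.Re z))%:C)%C)
                    (spectral_diag (hadj T *m T))) *m spectralmx (hadj T *m T).
  by rewrite /absmx /matfun invmx_unitary.
rewrite /matfun mf_unique //; congr (_ *m diag_mx _ *m _).
by apply/rowP => j; rewrite !mxE.
Qed.

End RS.

Section RS2.
Variable R : realType.
Local Open Scope sesquilinear_scope.
Local Open Scope ring_scope.

Lemma mixed n (T : 'M[R[i]]_n) (f g : R -> R)
  (fg : forall t : R, 0 <= t -> f t * g t = t) (x y : 'cV[R[i]]_n) :
  `|inner (T *m x) y| ^+ 2 <=
  inner (matfun (fun t => f t ^+ 2) (absmx T) *m x) x *
  inner (matfun (fun t => g t ^+ 2) (absmx (hadj T)) *m y) y.
Proof.
rewrite !inner_quad !fun_absmx hadjK.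
set P := spectralmx (hadj T *m T); set d := spectral_diag (hadj T *m T).
set Q := spectralmx (T *m hadj T); set e := spectral_diag (T *m hadj T).
have uP : P \is unitarymx := spectral_unitarymx _.
have uQ : Q \is unitarymx := spectral_unitarymx _.
have dP : hadj T *m T = P^t* *m diag_mx d *m P.
  by rewrite {1}(orthomx_spectralP (normal_sq T)) invmx_unitary.
have dQ : T *m hadj T = Q^t* *m diag_mx e *m Q.
  have := orthomx_spectralP (normal_sq (hadj T)); rewrite hadjK => {1}->.
  by rewrite invmx_unitary.
pose M := Q *m T *m P^t*.
have TM : T = Q^t* *m M *m P.
  by rewrite /M !mulmxA unitary_tl // mul1mx -mulmxA unitary_tl // mulmx1.
have MC : M^t* = P *m hadj T *m Q^t* by rewrite /M !trC_mul trmxCK mulmxA.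
have MM1 : M^t* *m M = diag_mx d.
  rewrite MC /M !mulmxA -(mulmxA _ _ Q) (unitary_tl uQ) mulmx1 -(mulmxA P) dP.
  rewrite !mulmxA. have t1 : P *m P^t* = 1%:M by exact: (unitary_tr uP). 
  by rewrite t1 mul1mx -mulmxA t1 mulmx1.
have MM2 : M *m M^t* = diag_mx e.
  rewrite MC /M !mulmxA -(mulmxA _ _ P) (unitary_tl uP) mulmx1 -(mulmxA Q) dQ.
  rewrite !mulmxA. have t1 : Q *m Q^t* = 1%:M by exact: (unitary_tr uQ).
  by rewrite t1 mul1mx -mulmxA t1 mulmx1.
have dge j : 0 <= d 0 j.
  move/matrixP: MM1 => /(_ j j); rewrite !mxE eqxx mulr1n => <-.
  by apply: sumr_ge0 => k _; rewrite !mxE mulrC mul_conjC_ge0.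
have ege j : 0 <= e 0 j.
  move/matrixP: MM2 => /(_ j j); rewrite !mxE eqxx mulr1n => <-.
  by apply: sumr_ge0 => k _; rewrite !mxE mul_conjC_ge0.
have sqE (z : R[i]) : 0 <= z -> z = ((Num.sqrt (complex.Re z))%:C)%C ^+ 2.
  move=> z0; rewrite -rmorphXn /= sqr_sqrtr; first by rewrite RRe_real // ger0_real.
  by move: z0; rewrite lecE => /andP[].
pose s := \row_j ((Num.sqrt (complex.Re (d 0 j)))%:C)%C : 'rV[R[i]]_n.
pose t := \row_j ((Num.sqrt (complex.Re (e 0 j)))%:C)%C : 'rV[R[i]]_n.
pose al := \row_j ((f (Num.sqrt (complex.Re (d 0 j))))%:C)%C : 'rV[R[i]]_n.
pose be := \row_j ((g (Num.sqrt (complex.Re (e 0 j))))%:C)%C : 'rV[R[i]]_n.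
have h1 : M^t* *m M = diag_mx (\row_j (s 0 j ^+ 2)).
  by rewrite MM1; congr diag_mx; apply/rowP => j; rewrite !mxE -sqE.
have h2 : M *m M^t* = diag_mx (\row_j (t 0 j ^+ 2)).
  by rewrite MM2; congr diag_mx; apply/rowP => j; rewrite !mxE -sqE.
have s0 j : 0 <= s 0 j by rewrite mxE ler0c sqrtr_ge0.
have t0 j : 0 <= t 0 j by rewrite mxE ler0c sqrtr_ge0.
have hab i j : t 0 i = s 0 j -> be 0 i * al 0 j = s 0 j.
  rewrite !mxE => /complexI ->; rewrite -rmorphM [g _ * _]mulrC fg //.
have alR j : al 0 j \is Num.real.
  by rewrite mxE; apply/complex_realP; eexists.
have beR j : be 0 j \is Num.real.
  by rewrite mxE; apply/complex_realP; eexists.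
have C1 := core h1 h2 s0 t0 hab alR beR (P *m x) (Q *m y).
have E1 : (y^t* *m (T *m x)) 0 0 = ((Q *m y)^t* *m M *m (P *m x)) 0 0.
  by rewrite {1}TM trC_mul !mulmxA.
have E2m : x^t* *m (P^t* *m diag_mx (\row_j ((f (Num.sqrt (complex.Re (d 0 j))) ^+ 2)%:C)%C) *m P *m x)
   = (P *m x)^t* *m diag_mx (\row_j (al 0 j ^+ 2)) *m (P *m x).
  have -> : \row_j ((f (Num.sqrt (complex.Re (d 0 j))) ^+ 2)%:C)%C = \row_j (al 0 j ^+ 2) :> 'rV[R[i]]_n.
    by apply/rowP => j; rewrite !mxE rmorphXn.
  by rewrite trC_mul !mulmxA.
have E3m : y^t* *m (Q^t* *m diag_mx (\row_j ((g (Num.sqrt (complex.Re (e 0 j))) ^+ 2)%:C)%C) *m Q *m y)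
   = (Q *m y)^t* *m diag_mx (\row_j (be 0 j ^+ 2)) *m (Q *m y).
  have -> : \row_j ((g (Num.sqrt (complex.Re (e 0 j))) ^+ 2)%:C)%C = \row_j (be 0 j ^+ 2) :> 'rV[R[i]]_n.
    by apply/rowP => j; rewrite !mxE rmorphXn.
  by rewrite trC_mul !mulmxA.
have E2 := congr1 (fun A : 'M[R[i]]_(1,1) => A 0 0) E2m.
have E3 := congr1 (fun A : 'M[R[i]]_(1,1) => A 0 0) E3m.
have key (a b c a' b' c' : R[i]) : a' = a -> b' = b -> c' = c ->
  `|a| ^+ 2 <= b * c -> `|a'| ^+ 2 <= b' * c' by move=> -> -> ->.
exact: (key _ _ _ _ _ _ E1 E2 E3 C1).
Qed.

Lemma fun_absmx_ge0 n (h : R -> R) (T : 'M[R[i]]_n) (x : 'cV[R[i]]_n) :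
  0 <= inner (matfun (fun t => h t ^+ 2) (absmx T) *m x) x.
Proof.
rewrite inner_quad fun_absmx !mulmxA -trC_mul -mulmxA quad_diag.
apply: sumr_ge0 => j _; rewrite mxE mulrAC; apply: mulr_ge0.
  by rewrite mulrC mul_conjC_ge0.
by rewrite mxE ler0c sqr_ge0.
Qed.

Lemma innD n (u w v : 'cV[R[i]]_n) : inner (u + w) v = inner u v + inner w v.
Proof. by rewrite !inner_quad mulmxDr mxE. Qed.

Lemma innZ n (a : R[i]) (u v : 'cV[R[i]]_n) : inner (a *: u) v = a * inner u v.
Proof. by rewrite !inner_quad -scalemxAr mxE. Qed.

Lemma innN n (u v : 'cV[R[i]]_n) : inner (- u) v = - inner u v.
Proof. by rewrite !inner_quad mulmxN mxE. Qed.

End RS2.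
Import numFieldNormedType.Exports.
Local Open Scope ring_scope.

Theorem theorem3p8 (R : realType) (n : nat) (T : 'M[R[i]]_n) (f g : R -> R)
  (f_cont : {within [set t : R | 0 <= t], continuous f}%classic)
  (g_cont : {within [set t : R | 0 <= t], continuous g}%classic)
  (f_ge0 : forall t : R, 0 <= t -> 0 <= f t)
  (g_ge0 : forall t : R, 0 <= t -> 0 <= g t)
  (fg : forall t : R, 0 <= t -> f t * g t = t) :
  forall x y : 'cV[R[i]]_n,
    let F := matfun (fun t => f t ^+ 2) (absmx T)
             + matfun (fun t => f t ^+ 2) (absmx (hadj T)) in
    let G := matfun (fun t => g t ^+ 2) (absmx T)
             + matfun (fun t => g t ^+ 2) (absmx (hadj T)) in
    `|inner (cartRe T *m x) y|
      <= 2^-1 * sqrtC (inner (F *m x) x * inner (G *m y) y)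
    /\
    `|inner (cartIm T *m x) y|
      <= 2^-1 * sqrtC (inner (F *m x) x * inner (G *m y) y).

Proof.
move=> x y F G.
have eF : inner (F *m x) x = inner (matfun (fun t => f t ^+ 2) (absmx T) *m x) x
   + inner (matfun (fun t => f t ^+ 2) (absmx (hadj T)) *m x) x.
  by rewrite /F mulmxDl innD.
have eG : inner (G *m y) y = inner (matfun (fun t => g t ^+ 2) (absmx T) *m y) y
   + inner (matfun (fun t => g t ^+ 2) (absmx (hadj T)) *m y) y.
  by rewrite /G mulmxDl innD.
have m1 := mixed T fg x y.
have m2 := mixed (hadj T) fg x y; rewrite hadjK in m2.
rewrite eF eG; split.
- rewrite /cartRe -scalemxAl mulmxDl innZ innD.
  apply: fin.
  + by rewrite ger0_norm // invr_ge0 ler0n.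
  + exact: fun_absmx_ge0.
  + exact: fun_absmx_ge0.
  + exact: fun_absmx_ge0.
  + exact: fun_absmx_ge0.
  + exact: m1.
  + exact: m2.
- rewrite /cartIm -scalemxAl mulmxBl innZ innD innN.
  apply: fin.
  + rewrite normrV; last by rewrite unitfE mulf_neq0 ?pnatr_eq0 // -normr_eq0 normCi oner_eq0.
    by rewrite normrM normCi mulr1 ger0_norm // ler0n.
  + exact: fun_absmx_ge0.
  + exact: fun_absmx_ge0.
  + exact: fun_absmx_ge0.
  + exact: fun_absmx_ge0.
  + exact: m1.
  + by rewrite normrN.
Qed.
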